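(* Let $S$ be a group, $N\triangleleft S$ a proper normal subgroup, $B$ any left $S$-act and $I$ a set with $|I|\ge1$. Then $B\amalg\overline{N}^{(\ast)I}$ is geometrically equivalent to $B\amalg\overline{N}$, and $\overline{N}^{(\ast)I}$ is geometrically equivalent to $\overline{N}$.
   Context: A left $S$-act is a nonempty set with an action $S\times A\to A$ satisfying $1a=a$, $(st)a=s(ta)$; homomorphisms preserve the action; $\amalg$ denotes coproduct (disjoint union), and $A^{(\ast)I}=\coprod_{i\in I}A_i$ with each $A_i=A$. For a subgroup $K$ of $S$, $\overline{K}=S/K$ is the $S$-act of left cosets with $s\cdot tK=stK$. For a nonempty finite set $X$, $F_X=\coprod_{x\in X}S_x$ is the free $S$-act on $X$. For an $S$-act $G$ and a relation $T\subseteq F_X\times F_X$, $T'_G=\{\mu:F_X\to G \text{ homomorphism}: T\subseteq\ker\mu\}$ and $T''_G=\bigcap_{\mu\in T'_G}\ker\mu$ (empty intersection $=F_X\times F_X$). $S$-acts $G_1,G_2$ are geometrically equivalent iff $T''_{G_1}=T''_{G_2}$ for all nonempty finite $X$ and all $T\subseteq F_X\times F_X$. *)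

(* Defs.v *)
From Stdlib Require Import FunctionalExtensionality PropExtensionality ProofIrrelevance.
From mathcomp Require Import all_boot.

Set Implicit Arguments.
Unset Strict Implicit.

Record Grp := {
  gcar :> Type;
  gmul : gcar -> gcar -> gcar;
  gone : gcar;
  ginv : gcar -> gcar;
  gmulA : forall x y z, gmul x (gmul y z) = gmul (gmul x y) z;
  gmul1x : forall x, gmul gone x = x;
  gmulx1 : forall x, gmul x gone = x;
  gmulVx : forall x, gmul (ginv x) x = gone;
  gmulxV : forall x, gmul x (ginv x) = gone }.

Arguments gmul {g}. Arguments gone {g}. Arguments ginv {g}.

Definition normal_subgroup (S : Grp) (N : S -> Prop) : Prop :=
  N gone /\
  (forall x y, N x -> N y -> N (gmul x y)) /\
  (forall x, N x -> N (ginv x)) /\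
  (forall g x, N x -> N (gmul (gmul g x) (ginv g))).

Record Act (S : Grp) := {
  acar :> Type;
  act : S -> acar -> acar;
  act1 : forall a, act gone a = a;
  actM : forall s t a, act (gmul s t) a = act s (act t a);
  act_nonempty : inhabited acar }.

Arguments act {S} {a0} : rename.

Definition is_hom (S : Grp) (A B : Act S) (f : A -> B) : Prop :=
  forall s a, f (act s a) = act s (f a).

Definition sum_act (S : Grp) (A B : Act S) (s : S) (x : A + B) : A + B :=
  match x with inl a => inl (act s a) | inr b => inr (act s b) end.

Definition coprod (S : Grp) (A B : Act S) : Act S.
Proof.
refine {| acar := (A + B)%type; act := @sum_act S A B |}.
- by move=> [a|b] /=; rewrite act1.
- by move=> s t [a|b] /=; rewrite actM.
- by case: (act_nonempty A) => a; constructor; exact: inl a.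
Defined.

(** A^(star I) = coproduct of |I| copies of A, carrier I * A. *)
Definition copower (S : Grp) (I : Type) (hI : inhabited I) (A : Act S) : Act S.
Proof.
refine {| acar := (I * A)%type; act := fun s p => (p.1, act s p.2) |}.
- by move=> [i a] /=; rewrite act1.
- by move=> s t [i a] /=; rewrite actM.
- by case: hI => i; case: (act_nonempty A) => a; constructor; exact: (i, a).
Defined.

(** Free act F_X = coprod_{x in X} S_x; (x, s) stands for s.x. *)
Definition free_act (S : Grp) (X : finType) (hX : inhabited X) : Act S.
Proof.
refine {| acar := (X * S)%type; act := fun t p => (p.1, gmul t p.2) |}.
- by move=> [x s] /=; rewrite gmul1x.
- by move=> s t [x u] /=; rewrite gmulA.
- by case: hX => x; constructor; exact: (x, gone).
Defined.

Lemma ginvM (S : Grp) (s t : S) : ginv (gmul s t) = gmul (ginv t) (ginv s).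
Proof.
transitivity (gmul (ginv (gmul s t)) (gmul (gmul s t) (gmul (ginv t) (ginv s)))).
- by rewrite -!gmulA (gmulA t) gmulxV gmul1x gmulxV gmulx1.
- by rewrite gmulA gmulVx gmul1x.
Qed.

Lemma ginv1 (S : Grp) : ginv (@gone S) = gone.
Proof. by rewrite -[ginv gone]gmulx1 gmulVx. Qed.

(** The act of left cosets S/K: a coset is the subset tK of S. *)
Definition is_coset (S : Grp) (K : S -> Prop) (C : S -> Prop) : Prop :=
  exists t, forall x, C x <-> K (gmul (ginv t) x).

Definition coset_type (S : Grp) (K : S -> Prop) := {C : S -> Prop | is_coset K C}.

Definition coset_act_fun (S : Grp) (K : S -> Prop) (s : S) (C : coset_type K) :
  coset_type K.
Proof.
exists (fun x => proj1_sig C (gmul (ginv s) x)).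
case: C => C [t Ht] /=; exists (gmul s t) => x.
by rewrite Ht ginvM gmulA.
Defined.

Lemma sig_eq_pi (A : Type) (P : A -> Prop) (a b : A) (pa : P a) (pb : P b) :
  a = b -> exist P a pa = exist P b pb.
Proof. by move=> E; subst; f_equal; apply: proof_irrelevance. Qed.

Definition coset_act (S : Grp) (K : S -> Prop) : Act S.
Proof.
refine {| acar := coset_type K; act := @coset_act_fun S K |}.
- move=> [C p]; apply: sig_eq_pi; apply: functional_extensionality => x.
  by rewrite ginv1 gmul1x.
- move=> s t [C p]; apply: sig_eq_pi; apply: functional_extensionality => x /=.
  by rewrite ginvM gmulA.
- constructor; exists (fun x => K (gmul (ginv gone) x)); by exists gone.
Defined.

Definition closure_rel (S : Grp) (G : Act S) (X : finType) (hX : inhabited X)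
  (T : free_act S hX -> free_act S hX -> Prop) (u v : free_act S hX) : Prop :=
  forall mu : free_act S hX -> G, is_hom mu ->
    (forall a b, T a b -> mu a = mu b) -> mu u = mu v.

Definition geom_equiv (S : Grp) (G1 G2 : Act S) : Prop :=
  forall (X : finType) (hX : inhabited X) (T : free_act S hX -> free_act S hX -> Prop)
    (u v : free_act S hX), closure_rel G1 T u v <-> closure_rel G2 T u v.

(* Main.v *)
Require Import Defs.
From mathcomp Require Import all_boot.
From Stdlib Require Import Classical ClassicalDescription FunctionalExtensionality.
Set Implicit Arguments.
Unset Strict Implicit.

Section Aux.
Variable S : Grp.

Lemma ginvK (g : S) : ginv (ginv g) = g.
Proof.
transitivity (gmul (gmul g (ginv g)) (ginv (ginv g))).
- by rewrite gmulxV gmul1x.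
- by rewrite -gmulA gmulxV gmulx1.
Qed.

Definition sep (A C : Act S) := forall p q : A, p <> q ->
  exists h : A -> C, is_hom h /\ h p <> h q.

Lemma sep_closure (G1 G2 : Act S) (X : finType) (hX : inhabited X) T u v :
  sep G1 G2 -> closure_rel G2 T u v -> closure_rel (X:=X) (hX:=hX) G1 T u v.
Proof.
move=> hs cl mu hmu hT; apply: NNPP => ne.
case: (hs _ _ ne) => h [hh ne']; apply: ne'.
apply: (cl (fun z => h (mu z))).
- by move=> s a; rewrite hmu hh.
- by move=> a b /hT ->.
Qed.

Lemma geq (G1 G2 : Act S) : sep G1 G2 -> sep G2 G1 -> geom_equiv G1 G2.
Proof. move=> h1 h2 X hX T u v; split; exact: sep_closure. Qed.

Definition liftc (B A C : Act S) (h : A -> C) (x : coprod B A) : coprod B C :=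
  match x with inl b => inl b | inr a => inr (h a) end.

Lemma liftc_hom (B A C : Act S) (h : A -> C) : is_hom h -> is_hom (liftc (B:=B) h).
Proof. by move=> hh s [b|a] //=; rewrite hh. Qed.

Lemma sep_coprod (B A C : Act S) (f : A -> C) : is_hom f -> sep A C ->
  sep (coprod B A) (coprod B C).
Proof.
move=> hf hs [b|a] [b'|a'] ne.
- exists (liftc (B:=B) f); split; first exact: liftc_hom.
  by move=> [E]; apply: ne; rewrite E.
- by exists (liftc (B:=B) f); split; first exact: liftc_hom.
- by exists (liftc (B:=B) f); split; first exact: liftc_hom.
- have ne2 : a <> a' by move=> E; apply: ne; rewrite E.
  case: (hs _ _ ne2) => h [hh nh]; exists (liftc (B:=B) h); split; first exact: liftc_hom.
  by move=> [E].
Qed.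

Lemma sep_inj (A C : Act S) (f : A -> C) : is_hom f -> injective f -> sep A C.
Proof. by move=> hf fi p q ne; exists f; split => // /fi. Qed.

Variable N : S -> Prop.
Hypothesis HN : normal_subgroup N.

Lemma conjN (g y : S) : N y <-> N (gmul (gmul (ginv g) y) g).
Proof.
case: HN => _ [_ [_ H4]]; split => Hy.
- by move: (H4 (ginv g) y Hy); rewrite ginvK.
- move: (H4 g _ Hy).
  by rewrite -!gmulA gmulxV gmulx1 !gmulA gmulxV gmul1x.
Qed.

Lemma rtrans_coset (g : S) (C : coset_type N) :
  is_coset N (fun x => proj1_sig C (gmul x (ginv g))).
Proof.
case: C => P [t Ht] /=; exists (gmul t g) => x.
rewrite Ht (conjN g) ginvM.
by rewrite -!gmulA gmulVx gmulx1.
Qed.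

Definition rtrans (g : S) (C : coset_type N) : coset_type N :=
  exist _ _ (rtrans_coset g C).

Lemma rtrans_hom g : is_hom (A:=coset_act N) (B:=coset_act N) (rtrans g).
Proof.
move=> s [P p]; apply: sig_eq_pi; apply: functional_extensionality => x /=.
by rewrite gmulA.
Qed.

Lemma rtrans_neq g (C : coset_type N) : ~ N g -> rtrans g C <> C.
Proof.
move=> ng E; move: (f_equal (@proj1_sig _ _) E) => /= E'.
case: C E E' => P [t Ht] /= _ E'.
have Pt : P t by apply/Ht; rewrite gmulVx; case: HN.
have : P (gmul t g).
  have := f_equal (fun f => f (gmul t g)) E'; rewrite /= -gmulA gmulxV gmulx1 => <-.
  exact: Pt.
by move/Ht; rewrite gmulA gmulVx gmul1x.
Qed.

End Aux.

Theorem proposition3p16 (S : Grp) (N : S -> Prop)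
  (HN : normal_subgroup N) (Hproper : exists s : S, ~ N s)
  (B : Act S) (I : Type) (hI : inhabited I) :
  geom_equiv (coprod B (copower hI (coset_act N))) (coprod B (coset_act N)) /\
  geom_equiv (copower hI (coset_act N)) (coset_act N).
Proof.
case: hI (hI) => i0 hI'.
case: Hproper => g ng.
set P := copower hI' (coset_act N).
have hsnd : is_hom (A:=P) (B:=coset_act N) snd by [].
have hinc : is_hom (A:=coset_act N) (B:=P) (fun c => (i0, c)) by [].
have iinc : injective (fun c : coset_act N => ((i0, c) : P)) by move=> a b [].
have s1 : sep P (coset_act N).
  move=> [i c] [j d] ne.
  case: (classic (c = d)) => [cd|cd]; last first.
    by exists snd; split.
  subst d.
  have ij : i <> j by move=> E; apply: ne; rewrite E.
  exists (fun x : P => if excluded_middle_informative (x.1 = i) then x.2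
                       else rtrans HN g x.2); split.
  - move=> s [k e] /=; destruct (excluded_middle_informative (k = i)) => //.
    exact: rtrans_hom.
  - rewrite /=; destruct (excluded_middle_informative (i = i)) => //.
    destruct (excluded_middle_informative (j = i)) as [E|E']; first by case: ij.
    move=> /= E; exact: (rtrans_neq (HN:=HN) (g:=g) (C:=c) ng (esym E)).
have s2 : sep (coset_act N) P by apply: sep_inj hinc iinc.
split; apply: geq.
- exact: sep_coprod hsnd s1.
- exact: sep_coprod hinc s2.
- exact: s1.
- exact: s2.
Qed.
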